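(* Let $S$ be a Riemann surface with a hermitian metric $ds^2$ (Kähler form $\omega$). If there is a potential function $\varphi$ of $\omega$ with $|\partial\varphi|_{ds^2}^2\equiv\mathsf{C}$ for a constant $\mathsf{C}>0$, then the Gaussian curvature of $ds^2$ is constant on the domain of $\varphi$, equal to $\kappa\equiv-2/\mathsf{C}$.
   Context: Conventions: $dd^c=\sqrt{-1}\partial\bar\partial$; locally $\omega=\sqrt{-1}g\,dz\wedge d\bar z$, a potential satisfies $\partial^2\varphi/\partial z\partial\bar z=g$, and $|\partial\varphi|^2=g^{-1}|\partial\varphi/\partial z|^2$. The Gaussian curvature is normalized so that the Poincaré metric $\sqrt{-1}\frac{2}{\mathsf{K}(1-|\zeta|^2)^2}d\zeta\wedge d\bar\zeta$ on the unit disc has curvature $-\mathsf{K}$. *)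

(* Defs.v *)
From Stdlib Require Import Reals List.
From Coquelicot Require Import Coquelicot.
Open Scope R_scope.

(* Everything is expressed in a local holomorphic coordinate z = x + i y on an
   open set U of the plane (a coordinate chart of the Riemann surface S
   inside the domain of the potential). *)

Definition pdx (f : R -> R -> R) (x y : R) : R := Derive (fun t => f t y) x.
Definition pdy (f : R -> R -> R) (x y : R) : R := Derive (fun t => f x t) y.

Definition pd (b : bool) (f : R -> R -> R) : R -> R -> R :=
  if b then pdx f else pdy f.

Fixpoint iter_pd (l : list bool) (f : R -> R -> R) : R -> R -> R :=
  match l with
  | nil => f
  | cons b l' => pd b (iter_pd l' f)
  end.

Definition smooth_on (U : R -> R -> Prop) (f : R -> R -> R) : Prop :=
  forall (l : list bool) (x y : R), U x y ->
    ex_derive (fun t => iter_pd l f t y) x /\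
    ex_derive (fun t => iter_pd l f x t) y /\
    continuous (fun p : R * R => iter_pd l f (fst p) (snd p)) (x, y).

Definition open_domain (U : R -> R -> Prop) : Prop :=
  open (fun p : R * R => U (fst p) (snd p)).

Definition laplacian (f : R -> R -> R) (x y : R) : R :=
  pdx (pdx f) x y + pdy (pdy f) x y.

Definition dzdzbar (f : R -> R -> R) (x y : R) : R := laplacian f x y / 4.

(* For real f: |df/dz|^2 = (f_x^2 + f_y^2)/4, since df/dz = (f_x - i f_y)/2. *)
Definition abs_dz_sq (f : R -> R -> R) (x y : R) : R :=
  ((pdx f x y) ^ 2 + (pdy f x y) ^ 2) / 4.

(* Metric omega = sqrt(-1) g dz /\ d\bar z.  Gaussian curvature normalized so
   that the Poincare metric sqrt(-1) 2/(K(1-|z|^2)^2) dz/\d\bar z has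
   curvature -K:  kappa = -(1/g) d^2 (log g)/dz d\bar z. *)
Definition gauss_curv (g : R -> R -> R) (x y : R) : R :=
  - dzdzbar (fun a b => ln (g a b)) x y / g x y.

(* Main.v *)
Require Import Defs.
From Stdlib Require Import Reals Lra List.
From Coquelicot Require Import Coquelicot.
Open Scope R_scope.

Lemma iter_pd_app l b f : iter_pd (l ++ b :: nil) f = iter_pd l (pd b f).
Proof. induction l; simpl; congruence. Qed.

Lemma smooth_pd U f b : smooth_on U f -> smooth_on U (pd b f).
Proof. intros H l x y Hu. rewrite <- iter_pd_app. apply H; auto. Qed.

Lemma smooth_pdx U f : smooth_on U f -> smooth_on U (pdx f).
Proof. exact (fun H => smooth_pd U f true H). Qed.
Lemma smooth_pdy U f : smooth_on U f -> smooth_on U (pdy f).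
Proof. exact (fun H => smooth_pd U f false H). Qed.

Lemma sm_ex_x U f x y : smooth_on U f -> U x y -> ex_derive (fun t => f t y) x.
Proof. intros H Hu. exact (proj1 (H nil x y Hu)). Qed.
Lemma sm_ex_y U f x y : smooth_on U f -> U x y -> ex_derive (fun t => f x t) y.
Proof. intros H Hu. exact (proj1 (proj2 (H nil x y Hu))). Qed.
Lemma sm_cont U f x y : smooth_on U f -> U x y -> continuity_2d_pt f x y.
Proof. intros H Hu. apply continuity_2d_pt_filterlim. exact (proj2 (proj2 (H nil x y Hu))). Qed.

Lemma open_loc U x y : open_domain U -> U x y -> locally_2d U x y.
Proof. intros Ho Hu. apply locally_2d_locally. apply Ho. exact Hu. Qed.

Lemma pdx_ext U F G x y : open_domain U -> U x y -> (forall u v, U u v -> F u v = G u v) ->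
  pdx F x y = pdx G x y.
Proof.
  intros Ho Hu H. unfold pdx. apply Derive_ext_loc.
  destruct (open_loc U x y Ho Hu) as [d Hd]. exists d. intros t Ht.
  apply H, Hd. exact Ht. rewrite Rminus_eq_0, Rabs_R0. apply cond_pos.
Qed.
Lemma pdy_ext U F G x y : open_domain U -> U x y -> (forall u v, U u v -> F u v = G u v) ->
  pdy F x y = pdy G x y.
Proof.
  intros Ho Hu H. unfold pdy. apply Derive_ext_loc.
  destruct (open_loc U x y Ho Hu) as [d Hd]. exists d. intros t Ht.
  apply H, Hd. rewrite Rminus_eq_0, Rabs_R0. apply cond_pos. exact Ht.
Qed.

Lemma schwarz_on U f x y : open_domain U -> smooth_on U f -> U x y ->
  pdx (pdy f) x y = pdy (pdx f) x y.
Proof.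
  intros Ho Hs Hu. unfold pdx, pdy. apply Schwarz.
  - destruct (open_loc U x y Ho Hu) as [d Hd]. exists d. intros u v H1 H2.
    specialize (Hd u v H1 H2).
    split; [|split; [|split]].
    + exact (sm_ex_x U f u v Hs Hd).
    + exact (sm_ex_y U f u v Hs Hd).
    + exact (sm_ex_x U (pdy f) u v (smooth_pdy U f Hs) Hd).
    + exact (sm_ex_y U (pdx f) u v (smooth_pdx U f Hs) Hd).
  - exact (sm_cont U (pdx (pdy f)) x y (smooth_pdx _ _ (smooth_pdy U f Hs)) Hu).
  - exact (sm_cont U (pdy (pdx f)) x y (smooth_pdy _ _ (smooth_pdx U f Hs)) Hu).
Qed.
Lemma alg p q a b d A B D Q g gx gy gxx gyy C : C <> 0 -> p^2+q^2 <> 0 ->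
 g = (p^2+q^2)/(4*C) -> g = (a+d)/4 -> gx = (2*p*a+2*q*b)/(4*C) -> gy = (2*p*b+2*q*d)/(4*C) ->
 gx = (A + D)/4 -> gy = (B+Q)/4 ->
 gxx = (2*(a*a + p*A) + 2*(b*b + q*B))/(4*C) -> gyy = (2*(b*b + p*D) + 2*(d*d + q*Q))/(4*C) ->
 - (((gxx*g - gx*gx)/g^2 + (gyy*g-gy*gy)/g^2)/4) / g = -2/C.
Proof.
  intros HC Hn Hg Hd Hgx Hgy HD HQ Hxx Hyy.
  assert (Ed : d = 4*g - a) by lra. assert (ED : D = 4*gx - A) by lra.
  assert (EQ : Q = 4*gy - B) by lra. clear Hd HD HQ.
  subst gxx gyy. subst Q. subst D. subst gy. subst d. subst gx. subst g.
  field. split; auto.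
Qed.
Ltac fixeta := repeat match goal with |- context [Derive (fun x0 => ?P x0) ?x] =>
  change (Derive (fun x0 => P x0) x) with (Derive P x) end.
Lemma D_sq (P Q : R->R) x C : ex_derive P x -> ex_derive Q x -> C <> 0 ->
  Derive (fun t => (P t ^2 + Q t ^2)/(4*C)) x = (2*P x*Derive P x + 2*Q x*Derive Q x)/(4*C).
Proof. intros HP HQ HC. apply is_derive_unique. auto_derive. tauto. fixeta. field. auto. Qed.
Lemma D_ln (G : R->R) x : ex_derive G x -> 0 < G x ->
  Derive (fun t => ln (G t)) x = Derive G x / G x.
Proof. intros HP HQ. apply is_derive_unique. auto_derive. tauto. fixeta. field. lra. Qed.
Lemma D_div (G1 G : R->R) x : ex_derive G1 x -> ex_derive G x -> G x <> 0 ->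
  Derive (fun t => G1 t / G t) x = (Derive G1 x * G x - G1 x * Derive G x)/ G x^2.
Proof. intros. apply is_derive_unique. auto_derive. tauto. fixeta. field. auto. Qed.
Lemma D_prod (P P1 Q Q1 : R->R) x C : ex_derive P x -> ex_derive Q x -> ex_derive P1 x -> ex_derive Q1 x -> C <> 0 ->
  Derive (fun t => (2*P t*P1 t + 2*Q t*Q1 t)/(4*C)) x = (2*(Derive P x * P1 x + P x * Derive P1 x) + 2*(Derive Q x * Q1 x + Q x * Derive Q1 x))/(4*C).
Proof. intros. apply is_derive_unique. auto_derive. tauto. fixeta. field. auto. Qed.
Lemma D_sum4 (P Q : R->R) x : ex_derive P x -> ex_derive Q x ->
  Derive (fun t => (P t + Q t)/4) x = (Derive P x + Derive Q x)/4.
Proof. intros. apply is_derive_unique. auto_derive. tauto. fixeta. field. Qed.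

Theorem corollary2p2 :
  forall (U : R -> R -> Prop) (g phi : R -> R -> R) (C : R),
    open_domain U ->
    smooth_on U g ->
    (forall x y, U x y -> 0 < g x y) ->
    smooth_on U phi ->
    (forall x y, U x y -> dzdzbar phi x y = g x y) ->
    0 < C ->
    (forall x y, U x y -> abs_dz_sq phi x y / g x y = C) ->
    forall x y, U x y -> gauss_curv g x y = - 2 / C.
Proof.
  intros U g phi C Ho Hg Hpos Hphi Hlap HC Hab x y Hu.
  set (p := pdx phi). set (q := pdy phi).
  assert (Sp : smooth_on U p) by (apply smooth_pdx; auto).
  assert (Sq : smooth_on U q) by (apply smooth_pdy; auto).
  assert (Spx : smooth_on U (pdx p)) by (apply smooth_pdx; auto).
  assert (Spy : smooth_on U (pdy p)) by (apply smooth_pdy; auto).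
  assert (Sqx : smooth_on U (pdx q)) by (apply smooth_pdx; auto).
  assert (Sqy : smooth_on U (pdy q)) by (apply smooth_pdy; auto).
  assert (Sgx : smooth_on U (pdx g)) by (apply smooth_pdx; auto).
  assert (Sgy : smooth_on U (pdy g)) by (apply smooth_pdy; auto).
  assert (HC0 : C <> 0) by lra.
  assert (F1 : forall u v, U u v -> g u v = (p u v ^2 + q u v ^2)/(4*C)).
  { intros u v H. specialize (Hab u v H). specialize (Hpos u v H).
    unfold abs_dz_sq in Hab. fold p q in Hab.
    assert (Pv : (p u v ^ 2 + q u v ^ 2) / 4 = C * g u v) by (rewrite <- Hab; field; lra).
    replace (p u v ^ 2 + q u v ^ 2) with (4 * (C * g u v)) by lra. field. lra. }
  assert (F2 : forall u v, U u v -> g u v = (pdx p u v + pdy q u v)/4).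
  { intros u v H. rewrite <- (Hlap u v H). reflexivity. }
  assert (F3 : forall u v, U u v -> pdy p u v = pdx q u v).
  { intros u v H. symmetry. apply (schwarz_on U); auto. }
  assert (Gx1 : forall u v, U u v -> pdx g u v = (2*p u v*pdx p u v + 2*q u v*pdx q u v)/(4*C)).
  { intros u v H. rewrite (pdx_ext U g _ u v Ho H F1). unfold pdx at 1.
    apply D_sq; auto; eapply sm_ex_x; eauto. }
  assert (Gy1 : forall u v, U u v -> pdy g u v = (2*p u v*pdy p u v + 2*q u v*pdy q u v)/(4*C)).
  { intros u v H. rewrite (pdy_ext U g _ u v Ho H F1). unfold pdy at 1.
    apply D_sq; auto; eapply sm_ex_y; eauto. }
  assert (Gx2 : pdx g x y = (pdx (pdx p) x y + pdx (pdy q) x y)/4).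
  { rewrite (pdx_ext U g _ x y Ho Hu F2). unfold pdx at 1.
    apply D_sum4; eapply sm_ex_x; eauto. }
  assert (Gy2 : pdy g x y = (pdy (pdx p) x y + pdy (pdy q) x y)/4).
  { rewrite (pdy_ext U g _ x y Ho Hu F2). unfold pdy at 1.
    apply D_sum4; eapply sm_ex_y; eauto. }
  assert (Gxx : pdx (pdx g) x y = (2*(pdx p x y * pdx p x y + p x y * pdx (pdx p) x y)
      + 2*(pdx q x y * pdx q x y + q x y * pdx (pdx q) x y))/(4*C)).
  { rewrite (pdx_ext U (pdx g) _ x y Ho Hu Gx1). unfold pdx at 1.
    apply D_prod; auto; eapply sm_ex_x; eauto. }
  assert (Gyy : pdy (pdy g) x y = (2*(pdy p x y * pdy p x y + p x y * pdy (pdy p) x y)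
      + 2*(pdy q x y * pdy q x y + q x y * pdy (pdy q) x y))/(4*C)).
  { rewrite (pdy_ext U (pdy g) _ x y Ho Hu Gy1). unfold pdy at 1.
    apply D_prod; auto; eapply sm_ex_y; eauto. }
  assert (M1 : pdx (pdy q) x y = pdy (pdy p) x y).
  { rewrite (schwarz_on U q x y Ho Sq Hu). symmetry. apply (pdy_ext U); auto. }
  assert (M2 : pdy (pdx p) x y = pdx (pdx q) x y).
  { rewrite <- (schwarz_on U p x y Ho Sp Hu). apply (pdx_ext U); auto. }
  assert (L1 : forall u v, U u v -> pdx (fun a b => ln (g a b)) u v = pdx g u v / g u v).
  { intros u v H. unfold pdx at 1. apply (D_ln (fun t => g t v)). eapply sm_ex_x; eauto. auto. }
  assert (L2 : forall u v, U u v -> pdy (fun a b => ln (g a b)) u v = pdy g u v / g u v).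
  { intros u v H. unfold pdy at 1. apply (D_ln (fun t => g u t)). eapply sm_ex_y; eauto. auto. }
  assert (LX : pdx (pdx (fun a b => ln (g a b))) x y =
     (pdx (pdx g) x y * g x y - pdx g x y * pdx g x y) / (g x y)^2).
  { rewrite (pdx_ext U _ _ x y Ho Hu L1). unfold pdx at 1.
    apply (D_div (fun t => pdx g t y) (fun t => g t y)); [eapply sm_ex_x; eauto | eapply sm_ex_x; eauto | specialize (Hpos x y Hu); lra]. }
  assert (LY : pdy (pdy (fun a b => ln (g a b))) x y =
     (pdy (pdy g) x y * g x y - pdy g x y * pdy g x y) / (g x y)^2).
  { rewrite (pdy_ext U _ _ x y Ho Hu L2). unfold pdy at 1.
    apply (D_div (fun t => pdy g x t) (fun t => g x t)); [eapply sm_ex_y; eauto | eapply sm_ex_y; eauto | specialize (Hpos x y Hu); lra]. }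
  unfold gauss_curv, dzdzbar, laplacian. rewrite LX, LY.
  specialize (Gx1 x y Hu). specialize (Gy1 x y Hu).
  rewrite (F3 x y Hu) in Gy1, Gyy. rewrite M1 in Gx2. rewrite M2 in Gy2.
  specialize (Hpos x y Hu). pose proof (F1 x y Hu) as E1.
  assert (Hn : p x y ^2 + q x y ^2 <> 0).
  { intro Z. rewrite Z in E1. unfold Rdiv in E1. rewrite Rmult_0_l in E1. lra. }
  eapply alg; eauto.
Qed.
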